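(* Let $0\le k\le n$ and $\lambda,\mu\vdash n$. Then $$m\big((\lambda,\mu),\alpha_{H_n^k}\big)=\big\langle\chi_\lambda\downarrow^{S_n}_{S_{n-k}},\chi_\mu\downarrow^{S_n}_{S_{n-k}}\big\rangle_{S_{n-k}},$$ that is, $\alpha_{H_n^k}\cong\bigoplus_{\lambda,\mu\vdash n}\langle\chi_\lambda\downarrow^{S_n}_{S_{n-k}},\chi_\mu\downarrow^{S_n}_{S_{n-k}}\rangle\, S^\lambda\otimes S^\mu$.
   Context: Permutations are composed as functions, and $\pi\in S_n$ is identified with the permutation matrix whose $(i,j)$ entry is $1$ iff $i=\pi(j)$. For $A\in GL_n(\mathbb{Z}_2)$ let $\eta(A)$ (resp. $\theta(A)$) be the partition obtained by sorting the row sums (resp. column sums) of $A$, computed as integers, in weakly decreasing order. For $0\le k\le n$, $H_n^k=\{A\in GL_n(\mathbb{Z}_2)\mid \eta(A)=(n,n-1,\dots,n-k+1,1^{n-k}),\ \theta(A)=((k+1)^{n-k},k,k-1,\dots,1)\}$. $\alpha_{H_n^k}$ is the complex permutation representation of $S_n\times S_n$ on the space with basis $H_n^k$ given by $(\pi,\sigma)\bullet A=\pi A\sigma^{-1}$. $m((\lambda,\mu),\varphi)$ is the multiplicity of the irreducible $S_n\times S_n$-module $S^\lambda\otimes S^\mu$ in $\varphi$. $\chi_\lambda$ is the irreducible character of $S_n$ indexed by $\lambda$; $S_{n-k}$ is embedded in $S_n$ as the permutations fixing $1,\dots,k$; $\langle\cdot,\cdot\rangle_{S_{n-k}}$ is the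 standard inner product of class functions on $S_{n-k}$. *)

(* Defs.v *)
From HB Require Import structures.
From mathcomp Require Import all_boot all_order all_algebra all_fingroup all_field all_character.
Set Implicit Arguments. Unset Strict Implicit. Unset Printing Implicit Defensive.
Import Order.TTheory GRing.Theory Num.Theory.
Local Open Scope ring_scope.

(* Indices are 0-based: the paper's {1,...,n} is 'I_n = {0,...,n-1}. *)

Definition is_partition (n : nat) (l : seq nat) : bool :=
  [&& sorted geq l, all (fun x => 0 < x)%N l & sumn l == n].

Definition pmat (n : nat) (p : 'S_n) : 'M['F_2]_n :=
  \matrix_(i, j) (i == p j)%:R.

Definition row_sums (n : nat) (A : 'M['F_2]_n) : seq nat :=
  [seq (\sum_(j < n) (A i j : nat))%N | i <- enum 'I_n].
Definition col_sums (n : nat) (A : 'M['F_2]_n) : seq nat :=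
  [seq (\sum_(i < n) (A i j : nat))%N | j <- enum 'I_n].

Definition eta (n : nat) (A : 'M['F_2]_n) : seq nat := sort geq (row_sums A).
Definition theta (n : nat) (A : 'M['F_2]_n) : seq nat := sort geq (col_sums A).

Definition eta_target (n k : nat) : seq nat :=
  [seq (n - i)%N | i <- iota 0 k] ++ nseq (n - k) 1%N.
Definition theta_target (n k : nat) : seq nat :=
  nseq (n - k) k.+1 ++ [seq (k - i)%N | i <- iota 0 k].

Definition H_set (n k : nat) : {set 'M['F_2]_n} :=
  [set A : 'M['F_2]_n | [&& A \in unitmx,
                           eta A == eta_target n k &
                           theta A == theta_target n k]].

Definition HAct (n : nat) (p s : 'S_n) (A : 'M['F_2]_n) : 'M['F_2]_n :=
  pmat p *m A *m pmat (s^-1)%g.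

(* character of the permutation representation alpha_{H_n^k} of S_n x S_n *)
Definition alphaH (n k : nat) (p s : 'S_n) : algC :=
  (#|[set A in H_set n k | HAct p s A == A]|)%:R.

(* Young diagram of shape l, cells numbered 0..n-1 in row reading order *)
Definition cell_row (l : seq nat) (p : nat) : nat :=
  count (fun i => sumn (take i.+1 l) <= p)%N (iota 0 (size l)).
Definition cell_col (l : seq nat) (p : nat) : nat :=
  (p - sumn (take (cell_row l p) l))%N.

(* A tableau is t : 'S_n, cell p containing entry t p.
   Tabloids are (encoded inside) row-assignments of entries f : 'I_n -> 'I_n.+1. *)
Definition tabloidT (n : nat) := {ffun 'I_n -> 'I_n.+1}.

Definition tabloid_of (n : nat) (l : seq nat) (t : 'S_n) : tabloidT n :=
  [ffun e => inord (cell_row l ((t^-1)%g e))].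

Definition colstab (n : nat) (l : seq nat) (t s : 'S_n) : bool :=
  [forall e : 'I_n, cell_col l ((t^-1)%g (s e)) == cell_col l ((t^-1)%g e)].

Definition tvec (n : nat) (f : tabloidT n) : 'rV[algC]_#|{: tabloidT n}| :=
  \row_j (j == enum_rank f)%:R.

(* polytabloid e_t = sum_{s in C_t} sgn(s) {s t};  s t has entry s (t p) in cell p,
   i.e. it is the permutation t * s in MathComp's convention *)
Definition polytabloid (n : nat) (l : seq nat) (t : 'S_n)
  : 'rV[algC]_#|{: tabloidT n}| :=
  \sum_(s : 'S_n | colstab l t s) (-1) ^+ odd_perm s *: tvec (tabloid_of l (t * s)%g).

(* rows span the Specht module S^l inside the permutation module on tabloids *)
Definition specht_mx (n : nat) (l : seq nat)
  : 'M[algC]_(#|{: 'S_n}|, #|{: tabloidT n}|) :=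
  \matrix_(i < #|{: 'S_n}|) polytabloid l (enum_val i).

(* action of pi on tabloids : entry e in row f e moves to pi e *)
Definition tab_act (n : nat) (p : 'S_n) (f : tabloidT n) : tabloidT n :=
  [ffun e => f ((p^-1)%g e)].

Definition tab_rep (n : nat) (p : 'S_n) : 'M[algC]_#|{: tabloidT n}| :=
  \matrix_(x, y) (enum_val y == tab_act p (enum_val x))%:R.

(* chi_lambda (pi) = trace of pi acting on the Specht module S^lambda *)
Definition chi (n : nat) (l : seq nat) (p : 'S_n) : algC :=
  let U := <<specht_mx n l>>%MS in
  \tr (in_submod U (val_submod (1%:M : 'M_(\rank U)) *m tab_rep p)).

(* multiplicity of S^lambda (x) S^mu in alpha_{H_n^k}: character inner product over S_n x S_n *)
Definition mult_H (n k : nat) (l m : seq nat) : algC :=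
  (#|{: 'S_n * 'S_n}|%:R)^-1 *
  \sum_(g : 'S_n * 'S_n) @alphaH n k g.1 g.2 * (chi l g.1 * chi m g.2)^*.

(* S_{n-k} : permutations fixing 1..k (0..k-1 here) *)
Definition Sfix (n k : nat) : {set 'S_n} :=
  [set s : 'S_n | [forall i : 'I_n, (i < k)%N ==> (s i == i)]].

Definition res_inner (n k : nat) (l m : seq nat) : algC :=
  (#|Sfix n k|%:R)^-1 * \sum_(s in Sfix n k) chi l s * (chi m s)^*.

(* Main.v *)
Require Import Defs.
From mathcomp Require Import all_boot all_order all_algebra all_fingroup all_field all_character.
From mathcomp Require Import zify.
Set Implicit Arguments. Unset Strict Implicit. Unset Printing Implicit Defensive.
Import Order.TTheory GRing.Theory Num.Theory Num.Def.
Local Open Scope ring_scope.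

Lemma tab_act1 n (f : tabloidT n) : tab_act 1%g f = f.
Proof. by apply/ffunP=> e; rewrite ffunE invg1 perm1. Qed.

Lemma tab_actM n (p q : 'S_n) (f : tabloidT n) :
  tab_act (p * q)%g f = tab_act q (tab_act p f).
Proof. by apply/ffunP=> e; rewrite !ffunE invMg permM. Qed.

Lemma tab_rep_repr n : mx_repr [set: 'S_n] (@tab_rep n).
Proof.
split.
  apply/matrixP=> x y; rewrite !mxE tab_act1.
  by rewrite (can_eq enum_valK) eq_sym.
move=> p q _ _; apply/matrixP=> x y; rewrite !mxE.
rewrite (bigD1 (enum_rank (tab_act p (enum_val x)))) //= big1 ?addr0.
  by rewrite !mxE enum_rankK eqxx mul1r tab_actM.
move=> z nz; rewrite !mxE.
have -> : (enum_val z == tab_act p (enum_val x)) = false.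
  apply/negbTE; apply: contra nz => /eqP <-; by rewrite enum_valK.
by rewrite mul0r.
Qed.

Definition trep n := MxRepresentation (@tab_rep_repr n).

Lemma tab_act_tabloid n (l : seq nat) (u q : 'S_n) :
  tab_act q (tabloid_of l u) = tabloid_of l (u * q)%g.
Proof. by apply/ffunP=> e; rewrite !ffunE invMg permM. Qed.

Lemma tvec_rep n (f : tabloidT n) q : tvec f *m tab_rep q = tvec (tab_act q f).
Proof.
apply/rowP=> y; rewrite !mxE (bigD1 (enum_rank f)) //= big1 ?addr0.
  rewrite !mxE eqxx mul1r enum_rankK.
  by rewrite -(can_eq enum_rankK) enum_valK.
by move=> z nz; rewrite !mxE (negbTE nz) mul0r.
Qed.

Lemma colstabJ n (l : seq nat) (t q s : 'S_n) :
  colstab l (t * q)%g (s ^ q)%g = colstab l t s.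
Proof.
apply/forallP/forallP => H e.
  by have := H (q e); rewrite invMg !permM !permK.
have := H (q^-1 e)%g.
by rewrite invMg !permM !permK => _; apply: H.
Qed.

Lemma polyJ n (l : seq nat) (t q : 'S_n) :
  polytabloid l t *m tab_rep q = polytabloid l (t * q)%g.
Proof.
rewrite /polytabloid mulmx_suml; symmetry.
rewrite (reindex_inj (conjg_inj q)) /=.
apply: eq_big => s; first by rewrite colstabJ.
move=> _; rewrite -scalemxAl tvec_rep tab_act_tabloid odd_permJ.
by rewrite conjgE !mulgA mulgK.
Qed.

Lemma specht_stable n (l : seq nat) q :
  (specht_mx n l *m tab_rep q <= specht_mx n l)%MS.
Proof.
apply/row_subP => i; rewrite row_mul rowK polyJ.
have <- : row (enum_rank (enum_val i * q)%g) (specht_mx n l) = polytabloid l (enum_val i * q)%g.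
  by rewrite rowK enum_rankK.
exact: row_sub.
Qed.

Lemma specht_module n (l : seq nat) : mxmodule (trep n) <<specht_mx n l>>%MS.
Proof.
apply/mxmoduleP => q _; rewrite (eqmxMr _ (genmxE _)) genmxE; exact: specht_stable.
Qed.

Lemma chiE n (l : seq nat) (x : 'S_n) :
  chi l x = cfRepr (submod_repr (specht_module n l)) x.
Proof. by rewrite cfunE inE mulr1n. Qed.

Lemma chi_class n (l : seq nat) (x y : 'S_n) : chi l (x ^ y)%g = chi l x.
Proof. by rewrite !chiE cfunJ ?inE. Qed.

Lemma trsubE N (U P : 'M[algC]_N) :
  \tr (in_submod U (val_submod 1%:M *m P)) =
  \tr (row_ebase U *m P *m invmx (row_ebase U) *m pid_mx (\rank U)).
Proof.
rewrite /in_submod /val_submod /= mul1mx /row_base -!mulmxA mxtrace_mulC.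
by rewrite !mulmxA -(mulmxA _ (pid_mx _)) pid_mx_id ?rank_leq_col.
Qed.

Lemma tr_conj N (M : 'M[algC]_N) : (\tr M)^* = \tr (map_mx conjC M).
Proof. by rewrite /mxtrace rmorph_sum; apply: eq_bigr => i _; rewrite mxE. Qed.

Lemma tab_rep_conj n (p : 'S_n) : map_mx conjC (tab_rep p) = tab_rep p.
Proof. by apply/matrixP=> x y; rewrite !mxE rmorph_nat. Qed.

Lemma specht_conj n (l : seq nat) : map_mx conjC (specht_mx n l) = specht_mx n l.
Proof.
apply/matrixP=> i j; rewrite !mxE /polytabloid !summxE rmorph_sum.
apply: eq_bigr => s _; rewrite !mxE rmorphM /= rmorph_sign.
by rewrite rmorph_nat.
Qed.

Lemma chi_real n (l : seq nat) (x : 'S_n) : (chi l x)^* = chi l x.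
Proof.
set U := <<specht_mx n l>>%MS.
have eqU : (map_mx conjC U :=: U)%MS.
  apply: eqmx_trans (map_genmx _ _) _; rewrite specht_conj; exact: eqmx_refl.
have modV : mxmodule (trep n) (map_mx conjC U).
  by rewrite (eqmx_module _ eqU) specht_module.
have : \tr (in_submod (map_mx conjC U) (val_submod 1%:M *m tab_rep x)) = chi l x.
  have := mxtrace_rsim (proj2 (mx_rsim_iso modV (specht_module n l)) (eqmx_iso _ eqU)).
  by move=> /(_ x (in_setT x)).
move=> E; rewrite -[RHS]E /chi -/U !trsubE tr_conj.
rewrite !map_mxM map_pid_mx map_invmx map_row_ebase tab_rep_conj.
by rewrite -(mxrank_map conjC U).
Qed.
Lemma F2le1 (x : 'F_2) : ((x : nat) <= 1)%N.
Proof. by case: x => [[|[|]]]. Qed.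

Lemma F2nat (b : bool) : (((b%:R : 'F_2)) : nat) = b.
Proof. by case: b. Qed.

Lemma F2inj (x y : 'F_2) : (x : nat) = (y : nat) -> x = y.
Proof. exact: val_inj. Qed.

Lemma HActE n (p s : 'S_n) (A : 'M['F_2]_n) i j :
  HAct p s A i j = A ((p^-1)%g i) ((s^-1)%g j).
Proof.
rewrite /HAct /pmat !mxE (bigD1 ((s^-1)%g j)) //= big1 ?addr0.
  rewrite !mxE eqxx mulr1 (bigD1 ((p^-1)%g i)) //= big1 ?addr0.
    by rewrite !mxE permKV eqxx mul1r.
  move=> z nz; rewrite !mxE; case: eqP => [E|]; last by rewrite mul0r.
  by case/eqP: nz; rewrite E permK.
move=> z nz; rewrite !mxE (negbTE nz) mulr0 //.
Qed.

Lemma HActM n (p s p' s' : 'S_n) (A : 'M['F_2]_n) :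
  HAct p s (HAct p' s' A) = HAct (p' * p)%g (s' * s)%g A.
Proof. by apply/matrixP=> i j; rewrite !HActE !invMg !permM. Qed.

Lemma HAct1 n (A : 'M['F_2]_n) : HAct 1%g 1%g A = A.
Proof. by apply/matrixP=> i j; rewrite !HActE invg1 !perm1. Qed.

Lemma HAct_inj n (p s : 'S_n) : injective (HAct p s).
Proof.
move=> A B E; have := congr1 (HAct (p^-1)%g (s^-1)%g) E.
by rewrite !HActM !mulgV !HAct1.
Qed.

Lemma sum_itv n a b :
  (\sum_(j < n) ((a <= j) && (j < b) : nat) = minn b n - a)%N.
Proof.
elim: n => [|n IH]; first by rewrite big_ord0; lia.
rewrite big_ord_recr /= IH.
case: (leqP a n) => han; case: (ltnP n b) => hnb /=; lia.
Qed.

Lemma sum_eq_le (I : finType) (F G : I -> nat) :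
  (forall x, F x <= G x)%N -> (\sum_x G x <= \sum_x F x)%N -> forall x, F x = G x.
Proof.
move=> le sle x; apply/eqP; rewrite eqn_leq le /=; rewrite leqNgt; apply/negP => lt.
have : (\sum_x F x < \sum_x G x)%N.
  rewrite (bigD1 x) //= [X in (_ < X)%N](bigD1 x) //=.
  by rewrite -addSn leq_add // leq_sum.
by rewrite ltnNge sle.
Qed.

Definition A0 n k : 'M['F_2]_n := \matrix_(i, j)
  ((if (i < k)%N then (if (j < k)%N then (i <= j)%N else true) else (i == j :> nat)) : bool)%:R.

Definition et n k (i : nat) : nat := if (i < k)%N then (n - i)%N else 1%N.
Definition ct k (j : nat) : nat := if (j < k)%N then j.+1 else k.+1.

Definition rsum n (A : 'M['F_2]_n) i : nat := (\sum_(j < n) (A i j : nat))%N.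
Definition csum n (A : 'M['F_2]_n) j : nat := (\sum_(i < n) (A i j : nat))%N.

Lemma A0_rsum n k (i : 'I_n) : (k <= n)%N -> rsum (A0 n k) i = et n k i.
Proof.
move=> kn; rewrite /rsum /et.
case: (ltnP i k) => ik.
  transitivity (\sum_(j < n) (((i <= j) && (j < k) : nat) + ((k <= j) && (j < n) : nat)))%N.
    apply: eq_bigr => j _; rewrite mxE F2nat ik ltn_ord.
    by case: (ltnP j k) => jk /=; case: (leqP i j) => ij /=; lia.
  rewrite big_split /= !sum_itv; lia.
transitivity (\sum_(j < n) ((i <= j) && (j < i.+1) : nat))%N.
  apply: eq_bigr => j _; rewrite mxE F2nat ltnNge ik /=.
  by case: (ltngtP i j) => ij /=; lia.
rewrite sum_itv; have := ltn_ord i; lia.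
Qed.

Lemma A0_csum n k (j : 'I_n) : (k <= n)%N -> csum (A0 n k) j = ct k j.
Proof.
move=> kn; rewrite /csum /ct.
case: (ltnP j k) => jk.
  transitivity (\sum_(i < n) ((0 <= i) && (i < j.+1) : nat))%N.
    apply: eq_bigr => i _; rewrite mxE F2nat jk.
    by case: (ltnP i k) => ik /=; case: (ltngtP i j) => ij /=; lia.
  rewrite sum_itv; have := ltn_ord j; lia.
transitivity (\sum_(i < n) (((0 <= i) && (i < k) : nat) + ((j <= i) && (i < j.+1) : nat)))%N.
  apply: eq_bigr => i _; rewrite mxE F2nat (ltnNge j k) jk /=.
  by case: (ltnP i k) => ik /=; case: (ltngtP i j) => ij /=; lia.
rewrite big_split !sum_itv /=; have := ltn_ord j; lia.
Qed.

Lemma A0_unit n k : A0 n k \in unitmx.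
Proof.
rewrite unitmxE -det_tr det_trig.
  rewrite (eq_bigr (fun _ => 1)) ?big1_eq ?unitr1 // => i _.
  by rewrite !mxE leqnn eqxx !if_same.
apply/is_trig_mxP => i j ij; rewrite !mxE.
case: ifP => jk; last by rewrite (gtn_eqF ij).
by rewrite (ltn_trans ij jk) leqNgt ij.
Qed.

Lemma geq_tr : transitive geq.
Proof. by move=> a b c /= h1 h2; apply: leq_trans h2 h1. Qed.
Lemma geq_tot : total geq.
Proof. by move=> a b /=; rewrite leq_total. Qed.
Lemma geq_anti : antisymmetric geq.
Proof. by move=> a b /= /andP[h1 h2]; apply/eqP; rewrite eqn_leq h1 h2. Qed.

Lemma sort_eq_perm (s t : seq nat) : sorted geq t -> (sort geq s == t) = perm_eq s t.
Proof.
move=> st; apply/eqP/idP => [<-|pst]; first by rewrite perm_sym perm_sort.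
rewrite (perm_sortP geq_tot geq_tr geq_anti _ _ pst).
exact: (sorted_sort geq_tr).
Qed.

Lemma perm_fun n (f g : 'I_n -> nat) :
  perm_eq [seq f i | i <- enum 'I_n] [seq g i | i <- enum 'I_n] <->
  exists p : 'S_n, forall i, f i = g (p i).
Proof.
have -> : [seq g i | i <- enum 'I_n] = val [tuple g i | i < n] by [].
split.
  move/tuple_permP => [p E]; exists p => i.
  have : [seq f i | i <- enum 'I_n] = [seq g (p i) | i <- enum 'I_n].
    by rewrite E /=; apply/eq_in_map => j _; rewrite tnth_mktuple.
  move/eq_in_map => /(_ i (mem_enum _ i)) ->.
  by [].
case=> p E; apply/tuple_permP; exists p.
apply/eq_in_map => i _.
by rewrite E tnth_mktuple.
Qed.

Lemma map_enum_iota n (f : nat -> nat) :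
  [seq f (nat_of_ord i) | i : 'I_n <- enum 'I_n] = map f (iota 0 n).
Proof. by rewrite -val_enum_ord -map_comp. Qed.

Lemma map_cst_nseq (f : nat -> nat) c m len :
  (forall i, (m <= i)%N -> f i = c) -> map f (iota m len) = nseq len c.
Proof.
move=> H; have := all_pred1P c (map f (iota m len)).
rewrite size_map size_iota => P; apply/P.
apply/allP => x /mapP [i]; rewrite mem_iota => /andP [mi _] ->.
by rewrite /= H.
Qed.

Lemma eta_targetE n k : (k <= n)%N ->
  eta_target n k = [seq et n k (nat_of_ord i) | i : 'I_n <- enum 'I_n].
Proof.
move=> kn; rewrite map_enum_iota.
have -> : iota 0 n = iota 0 k ++ iota k (n - k) by rewrite -iotaD subnKC.
rewrite map_cat /eta_target; congr (_ ++ _).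
  by apply/eq_in_map => i; rewrite mem_iota /et => /andP [_ ->].
by rewrite (@map_cst_nseq _ 1) // => i ki; rewrite /et ltnNge ki.
Qed.

Lemma revS k : [seq (k - i)%N | i <- iota 0 k] = rev (map succn (iota 0 k)).
Proof.
elim: k => [//|k IH].
transitivity (k.+1 :: [seq (k - i)%N | i <- iota 0 k]).
  have -> : iota 0 k.+1 = 0 :: iota 1 k by [].
  have -> : iota 1 k = map (addn 1) (iota 0 k) by rewrite -iotaDl.
  rewrite /= -map_comp; congr (_ :: _); apply: eq_map => i /=.
have -> : iota 0 k.+1 = iota 0 k ++ [:: k] by rewrite -addn1 iotaD.
by rewrite IH map_cat rev_cat.
Qed.

Lemma theta_targetE n k : (k <= n)%N ->
  theta_target n k = rev [seq ct k (nat_of_ord i) | i : 'I_n <- enum 'I_n].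
Proof.
move=> kn; rewrite map_enum_iota.
have -> : iota 0 n = iota 0 k ++ iota k (n - k) by rewrite -iotaD subnKC.
rewrite map_cat rev_cat /theta_target; congr (_ ++ _).
  by rewrite (@map_cst_nseq _ k.+1) ?rev_nseq // => i ki; rewrite /ct ltnNge ki.
rewrite revS; congr rev.
by apply/eq_in_map => i; rewrite mem_iota /ct => /andP [_ ->].
Qed.

Lemma eta_sorted n k : (k <= n)%N -> sorted geq (eta_target n k).
Proof.
move=> kn; rewrite eta_targetE // map_enum_iota.
apply: (homo_sorted _ _ (iota_sorted 0 n)) => x y /= xy.
rewrite /et; case: (ltnP x k); case: (ltnP y k) => //; lia.
Qed.

Lemma theta_sorted n k : (k <= n)%N -> sorted geq (theta_target n k).
Proof.
move=> kn; rewrite theta_targetE // map_enum_iota rev_sorted.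
apply: (homo_sorted _ _ (iota_sorted 0 n)) => x y /= xy.
rewrite /ct; case: (ltnP x k); case: (ltnP y k) => //; lia.
Qed.

Definition etl n k := [seq et n k (nat_of_ord i) | i : 'I_n <- enum 'I_n].
Definition ctl n k := [seq ct k (nat_of_ord i) | i : 'I_n <- enum 'I_n].

Lemma H_char n k (A : 'M['F_2]_n) : (k <= n)%N ->
  (A \in H_set n k) =
  [&& A \in unitmx, perm_eq (row_sums A) (etl n k) & perm_eq (col_sums A) (ctl n k)].
Proof.
move=> kn; rewrite inE /eta /theta sort_eq_perm ?eta_sorted //.
rewrite sort_eq_perm ?theta_sorted // eta_targetE // theta_targetE //.
by congr [&& _, _ & _]; rewrite perm_sym perm_rev perm_sym.
Qed.

Lemma pmatM n (p q : 'S_n) : pmat p *m pmat q = pmat (q * p)%g.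
Proof.
apply/matrixP => i j; rewrite !mxE (bigD1 (q j)) //= big1 ?addr0.
  by rewrite !mxE eqxx mulr1 permM.
by move=> z nz; rewrite !mxE (negbTE nz) mulr0.
Qed.

Lemma pmat1 n : pmat (1%g : 'S_n) = 1%:M.
Proof. by apply/matrixP => i j; rewrite !mxE perm1. Qed.

Lemma pmat_unit n (p : 'S_n) : pmat p \in unitmx.
Proof.
have : pmat p *m pmat (p^-1)%g = 1%:M by rewrite pmatM mulVg pmat1.
by case/mulmx1_unit.
Qed.

Lemma rsum_HAct n (p s : 'S_n) A i : rsum (HAct p s A) i = rsum A ((p^-1)%g i).
Proof.
rewrite /rsum (reindex_inj (@perm_inj _ s)) /=.
by apply: eq_bigr => j _; rewrite HActE permK.
Qed.

Lemma csum_HAct n (p s : 'S_n) A j : csum (HAct p s A) j = csum A ((s^-1)%g j).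
Proof.
rewrite /csum (reindex_inj (@perm_inj _ p)) /=.
by apply: eq_bigr => i _; rewrite HActE permK.
Qed.

Lemma HAct_H n k (p s : 'S_n) A : (k <= n)%N -> A \in H_set n k -> HAct p s A \in H_set n k.
Proof.
move=> kn; rewrite !H_char // => /and3P [uA rA cA]; apply/and3P; split.
- by rewrite /HAct !unitmx_mul uA !pmat_unit.
- apply: perm_trans rA; apply/(perm_fun (fun i => rsum (HAct p s A) i) (fun i => rsum A i)).
  by exists (p^-1)%g => i; rewrite rsum_HAct.
- apply: perm_trans cA; apply/(perm_fun (fun i => csum (HAct p s A) i) (fun i => csum A i)).
  by exists (s^-1)%g => i; rewrite csum_HAct.
Qed.

Lemma A0_H n k : (k <= n)%N -> A0 n k \in H_set n k.
Proof.
move=> kn; rewrite H_char //; apply/and3P; split; first exact: A0_unit.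
- apply/(perm_fun (fun i => rsum (A0 n k) i) (fun i => et n k i)).
  by exists 1%g => i; rewrite perm1 A0_rsum.
- apply/(perm_fun (fun i => csum (A0 n k) i) (fun i => ct k i)).
  by exists 1%g => i; rewrite perm1 A0_csum.
Qed.

Lemma SfixP n k (s : 'S_n) :
  reflect (forall i : 'I_n, (i < k)%N -> s i = i) (s \in Sfix n k).
Proof.
rewrite inE; apply: (iffP forallP) => H i.
  by move=> ik; have := H i; rewrite ik => /eqP.
by apply/implyP => /H ->.
Qed.

Lemma Sfix_inv n k (s : 'S_n) (x : 'I_n) : s \in Sfix n k ->
  ((x < k)%N -> (s^-1)%g x = x) /\ (((s^-1)%g x < k)%N = (x < k)%N).
Proof.
move/SfixP => H.
have fx : (x < k)%N -> (s^-1)%g x = x.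
  by move=> xk; rewrite -{1}(H x xk) permK.
split => //; case: (ltnP x k) => xk; first by rewrite fx.
apply/negbTE; rewrite -leqNgt; case: (ltnP ((s^-1)%g x) k) => // h.
have := H _ h; rewrite permKV => E.
by move: h; rewrite -E ltnNge xk.
Qed.

Lemma et_inj n k (x y : nat) : (k <= n)%N -> (x < k)%N -> (y < n)%N -> et n k x = et n k y -> x = y.
Proof. by rewrite /et => kn xk yn; rewrite xk; case: (ltnP y k) => yk; lia. Qed.

Lemma ct_inj k (x y : nat) : (x < k)%N -> ct k x = ct k y -> x = y.
Proof. by rewrite /ct => xk; rewrite xk; case: (ltnP y k) => yk; lia. Qed.

Lemma stabA0 n k (p s : 'S_n) : (k <= n)%N ->
  (HAct p s (A0 n k) == A0 n k) = (p == s) && (s \in Sfix n k).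
Proof.
move=> kn; apply/eqP/andP => [E|[/eqP <- sF]]; last first.
  apply/matrixP => i j; rewrite HActE !mxE.
  have [fi ei] := Sfix_inv i sF; have [fj ej] := Sfix_inv j sF.
  rewrite ei ej; case: (ltnP i k) => ik.
    by rewrite (fi ik); case: (ltnP j k) => jk //; rewrite (fj jk).
  by rewrite (inj_eq val_inj) (inj_eq (@perm_inj _ _)).
have hp : forall i : 'I_n, (i < k)%N -> (p^-1)%g i = i.
  move=> i ik; apply/val_inj; symmetry; apply: (et_inj kn ik (ltn_ord _)).
  by rewrite -!A0_rsum // -(rsum_HAct p s) E.
have hs : forall i : 'I_n, (i < k)%N -> (s^-1)%g i = i.
  move=> i ik; apply/val_inj; symmetry; apply: (ct_inj ik).
  by rewrite -!A0_csum // -(csum_HAct p s) E.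
have big : forall (q : 'S_n) (i : 'I_n), (forall i : 'I_n, (i < k)%N -> q i = i) ->
    (k <= i)%N -> (k <= q i)%N.
  move=> q i hq ki; rewrite leqNgt; apply/negP => qk.
  have := hq _ qk => /perm_inj E'; by move: ki; rewrite -E' leqNgt qk.
have eqps : (p^-1)%g = (s^-1)%g.
  apply/permP => i; case: (ltnP i k) => ik; first by rewrite hp // hs.
  have Eii := congr1 (fun M : 'M['F_2]_n => (M i i : nat)) E.
  move: Eii; rewrite /= HActE !mxE !F2nat.
  have h1 := big _ _ hp ik; have h2 := big _ _ hs ik.
  rewrite (ltnNge i k) ik eqxx /= (ltnNge _ k) h1 (ltnNge _ k) h2 /=.
  by case E': (_ == _) => // _; apply/eqP.
split; first by rewrite -(invgK p) eqps invgK.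
by apply/SfixP => i ik; rewrite -{1}(hs i ik) permKV.
Qed.


Lemma sum_itv0 n b : (\sum_(j < n) ((j < b)%N : nat) = minn b n)%N.
Proof.
have := sum_itv n 0 b; rewrite subn0 => <-; by apply: eq_bigr.
Qed.

Lemma sum0 (I : finType) (G : I -> nat) : (\sum_x G x = 0)%N -> forall x, G x = 0%N.
Proof.
move=> S x; apply/eqP; rewrite -leqn0 -S.
by rewrite (bigD1 x) //= leq_addr.
Qed.

Lemma sum_one (I : finType) (G : I -> nat) x0 :
  (forall x, G x <= 1)%N -> (\sum_x G x = 1)%N -> G x0 = 1%N -> forall x, x != x0 -> G x = 0%N.
Proof.
move=> le1 S G0 x nx; move: S; rewrite (bigD1 x0) //= (bigD1 x) //= G0 => S.
lia.
Qed.

Lemma sum_pos (I : finType) (G : I -> nat) :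
  (forall x, G x <= 1)%N -> (\sum_x G x = 1)%N -> exists x, G x = 1%N.
Proof.
move=> le1 S; case: (pickP (fun x => G x == 1%N)) => [x /eqP|none]; first by exists x.
have : (\sum_x G x = 0)%N.
  apply: big1 => x _; have := le1 x; have := none x; case: (G x) => [|[|]] //.
by rewrite S.
Qed.

Lemma core n k (b : 'I_n -> 'I_n -> nat) : (k <= n)%N ->
  (forall i j, b i j <= 1)%N ->
  (forall i, \sum_(j : 'I_n) b i j = et n k i)%N ->
  (forall j, \sum_(i : 'I_n) b i j = ct k j)%N ->
  [/\ (forall i : 'I_n, (i < k)%N -> forall j, b i j = (i <= j)%N),
      (forall i j : 'I_n, (k <= i)%N -> (j < k)%N -> b i j = 0%N) &
      (forall j : 'I_n, (k <= j)%N -> \sum_(i : 'I_n) ((k <= i)%N * b i j) = 1)%N].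
Proof.
move=> kn le1 R C.
pose lc j := (\sum_(i : 'I_n) ((k <= i)%N * b i j))%N.
have split_col : forall j, (\sum_(i : 'I_n) b i j = \sum_(i : 'I_n) ((i < k)%N * b i j) + lc j)%N.
  move=> j; rewrite /lc -big_split /=; apply: eq_bigr => i _.
  by case: (ltnP i k) => /= _; rewrite ?mul1n ?mul0n ?add0n ?addn0.
have hk : forall j, (\sum_(i : 'I_n) ((i < k)%N * b i j) <= k)%N.
  move=> j; apply: (@leq_trans (\sum_(i < n) ((i < k)%N : nat))).
    by apply: leq_sum => i _; have := le1 i j; case: (i < k)%N; rewrite ?mul1n ?mul0n.
  by rewrite sum_itv0; apply: geq_minl.
have sum_lc : (\sum_(j : 'I_n) lc j = n - k)%N.
  rewrite /lc exchange_big /=.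
  transitivity (\sum_(i < n) ((k <= i) && (i < n) : nat))%N; last by rewrite sum_itv minnn.
  apply: eq_bigr => i _; rewrite -big_distrr /= R /et ltn_ord andbT.
  by case: (ltnP i k) => /=; rewrite ?muln1 ?muln0.
have lc_eq : forall j : 'I_n, ((k <= j)%N : nat) = lc j.
  apply: sum_eq_le => [j|].
    case: (ltnP j k) => //= kj; have := split_col j; rewrite C /ct ltnNge kj /=.
    have := hk j; move: (\sum_(i < n) _)%N (lc j) => x y; lia.
  rewrite sum_lc.
  have := sum_itv n k n; rewrite minnn => <-; apply: leq_sum => j _; by rewrite ltn_ord andbT.
have heavy_full : forall j : 'I_n, (k <= j)%N -> forall i : 'I_n, (i < k)%N -> b i j = 1%N.
  move=> j kj i ik.
  have E := sum_eq_le (F := fun i : 'I_n => ((i < k)%N * b i j)%N) (G := fun i : 'I_n => ((i < k)%N : nat)).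
  have := E _ _ i; rewrite ik mul1n; apply.
    by move=> x; have := le1 x j; case: (x < k)%N; rewrite ?mul1n ?mul0n.
  have := split_col j; rewrite C /ct ltnNge kj /= -lc_eq kj sum_itv0 (minn_idPl kn).
  lia.
have light0 : forall i j : 'I_n, (k <= i)%N -> (j < k)%N -> b i j = 0%N.
  move=> i j ki jk; have := lc_eq j; rewrite leqNgt jk /= => /esym /sum0 /(_ i).
  by rewrite ki mul1n.
split => //; last first.
  by move=> j kj; have := lc_eq j; rewrite kj /lc => <-.
have main : forall m (i : 'I_n), val i = m -> (i < k)%N -> forall j, b i j = (i <= j)%N.
  elim/ltn_ind => m IH i im ik.
  have f1 : forall j : 'I_n, (j < i)%N -> b i j = 0%N.
    move=> j ji.
    have E := sum_eq_le (F := fun i' : 'I_n => ((i' <= j)%N : nat)) (G := fun i' => b i' j).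
    suff h : ((i <= j)%N : nat) = b i j by rewrite -h leqNgt ji.
    apply: E => [x|].
      case: (leqP x j) => xj //=.
      rewrite (IH x) ?xj //; first by rewrite -im; apply: (leq_ltn_trans xj ji).
      exact: (leq_ltn_trans xj (ltn_trans ji ik)).
    rewrite C /ct (ltn_trans ji ik).
    have -> : (\sum_(x < n) ((x <= j)%N : nat)) = (\sum_(x < n) ((x < j.+1)%N : nat)) by [].
    by rewrite sum_itv0 (minn_idPl (ltn_ord j)).
  move=> j.
  have E := sum_eq_le (F := fun j' : 'I_n => b i j') (G := fun j' => ((i <= j')%N : nat)).
  apply: E => [x|].
    by case: (ltnP x i) => xi /=; [rewrite f1 | apply: le1].
  rewrite R /et ik; have := sum_itv n i n; rewrite minnn => <-.
  by apply: leq_sum => x _; rewrite ltn_ord andbT.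
by move=> i ik; apply: (main i).
Qed.

Lemma core_perm n k (B : 'M['F_2]_n) : (k <= n)%N ->
  (forall i, rsum B i = et n k i) -> (forall j, csum B j = ct k j) ->
  exists q : 'S_n, forall i j, B i j = A0 n k (q i) j.
Proof.
move=> kn R C.
pose b i j := (B i j : nat).
have [heavy light0 lcj] := @core n k b kn (fun i j => F2le1 (B i j)) R C.
pose tau i := odflt i [pick j | b i j == 1%N].
have tauP : forall i : 'I_n, (k <= i)%N ->
    [/\ b i (tau i) = 1%N, (k <= tau i)%N & forall j, j != tau i -> b i j = 0%N].
  move=> i ki.
  have Ri : (\sum_j b i j = 1)%N by have := R i; rewrite /et ltnNge ki.
  have b1 : b i (tau i) = 1%N.
    rewrite /tau; case: pickP => [j /eqP //|none].
    have [j bj] := sum_pos (fun j => F2le1 (B i j)) Ri.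
    by move: (none j); rewrite /b bj eqxx.
  split => //.
    rewrite leqNgt; apply/negP => tk; by move: b1; rewrite light0.
  by apply: sum_one (fun j => F2le1 (B i j)) Ri b1.
pose f (i : 'I_n) := if (i < k)%N then i else tau i.
have f_inj : injective f.
  move=> i i'; rewrite /f.
  case: (ltnP i k) => ik; case: (ltnP i' k) => i'k //.
  - have [_ t _] := tauP i' i'k => E; by move: ik; rewrite E ltnNge t.
  - have [_ t _] := tauP i ik => E; by move: i'k; rewrite -E ltnNge t.
  move=> E; apply/eqP; apply/negP => /negP nii.
  have [b1 t _] := tauP i ik; have [b1' _ _] := tauP i' i'k.
  have := @sum_one _ (fun x : 'I_n => ((k <= x)%N * b x (tau i))%N) i.
  move=> /(_ _ (lcj _ t)) H.
  have le1' : forall x : 'I_n, ((k <= x)%N * b x (tau i) <= 1)%N.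
    by move=> x; have := F2le1 (B x (tau i)); case: (k <= x)%N; rewrite ?mul1n ?mul0n.
  have Hi : ((k <= i)%N * b i (tau i))%N = 1%N by rewrite ik mul1n b1.
  have := H le1' Hi i'.
  by rewrite eq_sym nii i'k mul1n E b1' => /(_ isT) /eqP.
exists (perm f_inj) => i j; apply: F2inj; rewrite permE mxE F2nat /f.
case: (ltnP i k) => ik.
  rewrite ik; have := heavy i ik j; rewrite /b => ->; case: (ltnP j k) => // kj.
  by rewrite (leq_trans (ltnW ik) kj).
have [b1 t z] := tauP i ik.
rewrite ltnNge t /=.
case: (eqVneq (tau i) j) => [<-|ne]; first by rewrite eqxx; exact: b1.
have := z j; rewrite eq_sym ne => /(_ isT) h.
case: eqP => [E|_]; [by move: ne; rewrite (val_inj E) eqxx | exact: h].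
Qed.

Lemma orbitA0 n k (A : 'M['F_2]_n) : (k <= n)%N -> A \in H_set n k ->
  exists h1 h2 : 'S_n, A = HAct h1 h2 (A0 n k).
Proof.
move=> kn; rewrite H_char // => /and3P [_ rA cA].
have [p0 Hp] := (perm_fun (fun i => rsum A i) (fun i => et n k i)).1 rA.
have [s0 Hs] := (perm_fun (fun i => csum A i) (fun i => ct k i)).1 cA.
pose B := HAct p0 s0 A.
have [q Hq] : exists q : 'S_n, forall i j, B i j = A0 n k (q i) j.
  apply: core_perm => // [i|j].
    by rewrite rsum_HAct Hp permKV.
  by rewrite csum_HAct Hs permKV.
have EB : B = HAct (q^-1)%g 1%g (A0 n k).
  by apply/matrixP => i j; rewrite Hq HActE invgK invg1 perm1.
exists ((q^-1) * (p0^-1))%g, (1 * (s0^-1))%g.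
rewrite -HActM -EB /B HActM !mulgV; exact: (esym (HAct1 A)).
Qed.

Lemma HAct_eqA0 n k (a b h1 h2 : 'S_n) : (k <= n)%N ->
  (HAct a b (A0 n k) == HAct h1 h2 (A0 n k)) =
  ((a * h1^-1)%g == (b * h2^-1)%g) && ((b * h2^-1)%g \in Sfix n k).
Proof.
move=> kn; rewrite -(inj_eq (@HAct_inj _ (h1^-1)%g (h2^-1)%g)) !HActM !mulgV HAct1.
exact: stabA0.
Qed.

Lemma sum_fix n k (h1 h2 : 'S_n) (Phi : 'S_n -> 'S_n -> algC) : (k <= n)%N ->
  \sum_(a : 'S_n) \sum_(b : 'S_n)
     (HAct a b (A0 n k) == HAct h1 h2 (A0 n k))%:R * Phi a b =
  \sum_(x in Sfix n k) Phi (x * h1)%g (x * h2)%g.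
Proof.
move=> kn; rewrite (reindex_inj (mulIg h1)) /=.
rewrite [RHS]big_mkcond /=; apply: eq_bigr => x _.
rewrite (reindex_inj (mulIg h2)) /=.
rewrite (bigD1 x) //= big1 ?addr0.
  by rewrite HAct_eqA0 // !mulgK eqxx /=; case: (x \in Sfix n k); rewrite ?mul1r ?mul0r.
move=> y nyx; rewrite HAct_eqA0 // !mulgK.
by rewrite eq_sym (negbTE nyx) mul0r.
Qed.

Lemma card_setP (T : finType) (S : {set T}) (P : pred T) :
  #|[set x in S | P x]| = (\sum_(x in S) (P x : nat))%N.
Proof.
rewrite -sum1_card big_mkcond [RHS]big_mkcond /=; apply: eq_bigr => x _.
by rewrite inE; case: (x \in S); case: (P x).
Qed.

Theorem mainTheorem13 (n k : nat) (l m : seq nat) :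
  (k <= n)%N -> is_partition n l -> is_partition n m ->
  mult_H n k l m = res_inner n k l m.
Proof.
move=> kn _ _.
pose T := \sum_(x in Sfix n k) chi l x * chi m x.
pose Fp (a b : 'S_n) := chi l a * chi m b.
have HA0 := A0_H kn.
have perA : forall A, A \in H_set n k ->
    \sum_(a : 'S_n) \sum_(b : 'S_n) (HAct a b A == A)%:R * Fp a b = T.
  move=> A /(orbitA0 kn) [h1 [h2 ->]].
  transitivity (\sum_(a : 'S_n) \sum_(b : 'S_n)
      (HAct a b (A0 n k) == HAct h1 h2 (A0 n k))%:R * Fp (h1^-1 * a)%g (h2^-1 * b)%g).
    rewrite (reindex_inj (mulgI (h1^-1)%g)) /=; apply: eq_bigr => a _.
    rewrite (reindex_inj (mulgI (h2^-1)%g)) /=; apply: eq_bigr => b _.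
    by rewrite HActM !mulKVg.
  rewrite sum_fix //; apply: eq_bigr => x _.
  by rewrite /Fp -!conjgE !chi_class.
have perA1 : forall A, A \in H_set n k ->
    \sum_(a : 'S_n) \sum_(b : 'S_n) (HAct a b (A0 n k) == A)%:R = #|Sfix n k|%:R :> algC.
  move=> A /(orbitA0 kn) [h1 [h2 ->]].
  have := sum_fix h1 h2 (fun _ _ => 1) kn; rewrite sumr_const => <-.
  by apply: eq_bigr => a _; apply: eq_bigr => b _; rewrite mulr1.
have cardG : (#|{: 'S_n * 'S_n}|%:R : algC) = #|H_set n k|%:R * #|Sfix n k|%:R.
  have <- : \sum_(g : 'S_n * 'S_n) (1 : algC) = #|{: 'S_n * 'S_n}|%:R by rewrite sumr_const.
  rewrite -(pair_bigA _ (fun (_ _ : 'S_n) => (1 : algC))) /=.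
  transitivity (\sum_(a : 'S_n) \sum_(b : 'S_n) \sum_(A in H_set n k)
                   (HAct a b (A0 n k) == A)%:R : algC).
    apply: eq_bigr => a _; apply: eq_bigr => b _.
    rewrite (bigD1 (HAct a b (A0 n k))) ?HAct_H //= eqxx big1 ?addr0 //.
    by move=> A /andP [_ nA]; rewrite eq_sym (negbTE nA).
  transitivity (\sum_(a : 'S_n) \sum_(A in H_set n k) \sum_(b : 'S_n)
                   (HAct a b (A0 n k) == A)%:R : algC).
    by apply: eq_bigr => a _; rewrite exchange_big.
  rewrite exchange_big /=.
  rewrite (eq_bigr (fun _ => #|Sfix n k|%:R)); last by move=> A HA; rewrite perA1.
  by rewrite sumr_const mulr_natl.
have main : \sum_(g : 'S_n * 'S_n) @alphaH n k g.1 g.2 * (chi l g.1 * chi m g.2)^*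
            = #|H_set n k|%:R * T.
  rewrite -(pair_bigA _ (fun a b : 'S_n => @alphaH n k a b * (chi l a * chi m b)^*)) /=.
  transitivity (\sum_(a : 'S_n) \sum_(b : 'S_n) \sum_(A in H_set n k)
                   (HAct a b A == A)%:R * Fp a b).
    apply: eq_bigr => a _; apply: eq_bigr => b _.
    rewrite rmorphM /= !chi_real /alphaH card_setP natr_sum mulr_suml.
    by apply: eq_bigr.
  transitivity (\sum_(a : 'S_n) \sum_(A in H_set n k) \sum_(b : 'S_n)
                   (HAct a b A == A)%:R * Fp a b).
    by apply: eq_bigr => a _; rewrite exchange_big.
  rewrite exchange_big /=.
  rewrite (eq_bigr (fun _ => T)); last by move=> A HA; rewrite perA.
  by rewrite sumr_const mulr_natl.
have nzH : (#|H_set n k|%:R : algC) != 0.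
  by rewrite pnatr_eq0 -lt0n; apply/card_gt0P; exists (A0 n k).
rewrite /mult_H main cardG /res_inner.
have -> : \sum_(s in Sfix n k) chi l s * (chi m s)^* = T.
  by apply: eq_bigr => s _; rewrite chi_real.
by rewrite invfM [_^-1 * _]mulrC -mulrA (mulrA _ (#|H_set n k|%:R)) mulVf // mul1r.
Qed.
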